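(* Let $k$ be a commutative ring with trivial $C_2$-action and let $M$, $N$ be $k$-modules with $k$-linear involutions, such that $2$ is invertible in $M$ or in $N$. Then there is an isomorphism of $C_2$-Mackey functors \[\underline M^{\mathrm{fix}}\Box_{\underline k^c}\underline N^{\mathrm{fix}}\cong\underline{(M\otimes_k N)}^{\mathrm{fix}},\] natural in $M$ and $N$, where $C_2$ acts diagonally on $M\otimes_k N$. If $M$ and $N$ are moreover commutative $k$-algebras (with involutions that are $k$-algebra maps), this is an isomorphism of $C_2$-Tambara functors.
   Context: $C_2=\{e,\tau\}$. For an abelian group (resp. commutative ring) $L$ with involution $a\mapsto\bar a$, $\underline L^{\mathrm{fix}}$ is the $C_2$-Mackey (resp. Tambara) functor with value $L^{C_2}$ at $C_2/C_2$, $L$ at $C_2/e$ (Weyl action the involution), $\mathrm{res}$ the inclusion, $\mathrm{tr}(a)=a+\bar a$, and (for rings) $\mathrm{nm}(a)=a\bar a$; for trivial involution it is written $\underline L^c$. $\Box$ is the box product of $C_2$-Mackey functors, and for a Tambara functor $\underline S$ and $\underline S$-modules $\underline M,\underline N$, $\underline M\Box_{\underline S}\underline N$ is the coequalizer of the two maps $\underline M\Box\underline S\Box\underline N\rightrightarrows\underline M\Box\underline N$ given by the actions. Here $\underline M^{\mathrm{fix}}$ and $\underline N^{\mathrm{fix}}$ are $\underline k^c$-modules via the $k$-module structures. *)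

(* Defs.v *)
From HB Require Import structures.
From mathcomp Require Import all_boot all_order all_algebra.
Set Implicit Arguments. Unset Strict Implicit. Unset Printing Implicit Defensive.
Import Order.TTheory GRing.Theory.
Local Open Scope ring_scope.

Definition is_add (U V : zmodType) (f : U -> V) := forall x y, f (x + y) = f x + f y.

Record mackey := Mackey {
  mk_top : zmodType;            (* value at C_2/C_2 *)
  mk_bot : zmodType;            (* value at C_2/e   *)
  mk_w   : mk_bot -> mk_bot;
  mk_res : mk_top -> mk_bot;
  mk_tr  : mk_bot -> mk_top }.

Definition is_mackey (M : mackey) :=
  [/\ is_add (@mk_w M), is_add (@mk_res M) & is_add (@mk_tr M)] /\
  [/\ involutive (@mk_w M),
      (forall a, mk_w (mk_res a) = mk_res a :> mk_bot M),
      (forall x, mk_tr (mk_w x) = mk_tr x :> mk_top M) &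
      (forall x, mk_res (mk_tr x) = x + mk_w x :> mk_bot M)].

Record mackey_hom (M N : mackey) := MackeyHom {
  mh_top : mk_top M -> mk_top N;
  mh_bot : mk_bot M -> mk_bot N }.

Definition is_mackey_hom (M N : mackey) (f : mackey_hom M N) :=
  [/\ is_add (mh_top f), is_add (mh_bot f),
      (forall x, mh_bot f (mk_w x) = mk_w (mh_bot f x)),
      (forall a, mh_bot f (mk_res a) = mk_res (mh_top f a)) &
      (forall x, mh_top f (mk_tr x) = mk_tr (mh_bot f x))].

Definition is_mackey_iso (M N : mackey) (f : mackey_hom M N) :=
  [/\ is_mackey_hom f, bijective (mh_top f) & bijective (mh_bot f)].

(* ---------- Dress pairings M x N -> P (= maps M [] N -> P) ---------- *)
Record pairing (M N P : mackey) := Pairing {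
  pr_top : mk_top M -> mk_top N -> mk_top P;
  pr_bot : mk_bot M -> mk_bot N -> mk_bot P }.

Definition is_dress_pairing (M N P : mackey) (p : pairing M N P) :=
  [/\ (forall a, is_add (pr_top p a)), (forall b, is_add (pr_top p ^~ b)),
      (forall x, is_add (pr_bot p x)) & (forall y, is_add (pr_bot p ^~ y))] /\
  [/\ (forall x y, mk_w (pr_bot p x y) = pr_bot p (mk_w x) (mk_w y)),
      (forall a b, mk_res (pr_top p a b) = pr_bot p (mk_res a) (mk_res b)),
      (forall x b, mk_tr (pr_bot p x (mk_res b)) = pr_top p (mk_tr x) b) &
      (forall a y, mk_tr (pr_bot p (mk_res a) y) = pr_top p a (mk_tr y))].

(* p is balanced for a right S-action on M and a left S-action on N: i.e. the
   induced map M [] N -> P coequalizes  M [] S [] N ==> M [] N  (M [] S [] N is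
   generated by elementary tensors at both levels together with transfers). *)
Definition balanced (S M N P : mackey) (muM : pairing M S M) (muN : pairing S N N)
    (p : pairing M N P) :=
  (forall a s b, pr_top p (pr_top muM a s) b = pr_top p a (pr_top muN s b)) /\
  (forall x s y, pr_bot p (pr_bot muM x s) y = pr_bot p x (pr_bot muN s y)).

(* (B, beta) is the relative box product  M []_S N : the coequalizer of
   M [] S [] N ==> M [] N, i.e. beta is the universal S-balanced Dress pairing. *)
Definition is_rel_box (S M N : mackey) (muM : pairing M S M) (muN : pairing S N N)
    (B : mackey) (beta : pairing M N B) :=
  [/\ is_mackey B, is_dress_pairing beta, balanced muM muN beta &
      forall (P : mackey) (p : pairing M N P),
        is_mackey P -> is_dress_pairing p -> balanced muM muN p ->
        exists f : mackey_hom B P,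
          [/\ is_mackey_hom f,
              (forall a b, mh_top f (pr_top beta a b) = pr_top p a b),
              (forall x y, mh_bot f (pr_bot beta x y) = pr_bot p x y) &
              (forall g : mackey_hom B P, is_mackey_hom g ->
                 (forall a b, mh_top g (pr_top beta a b) = pr_top p a b) ->
                 (forall x y, mh_bot g (pr_bot beta x y) = pr_bot p x y) ->
                 (forall u, mh_top g u = mh_top f u) /\
                 (forall v, mh_bot g v = mh_bot f v))]].

Section Fix.
Variables (V : zmodType) (s : {additive V -> V}).

Definition fixp : {pred V} := fun x => s x == x.

Lemma fixp_zmod_closed : zmod_closed fixp.
Proof.
split; first by rewrite /fixp unfold_in /= raddf0.
by move=> x y; rewrite /fixp !unfold_in /= raddfB => /eqP -> /eqP ->.
Qed.

HB.instance Definition _ := GRing.isZmodClosed.Build V fixp fixp_zmod_closed.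

Record fix_t := FixT { fix_val :> V; _ : fix_val \in fixp }.
HB.instance Definition _ := [isSub for fix_val].
HB.instance Definition _ := [Choice of fix_t by <:].
HB.instance Definition _ := [SubChoice_isSubZmodule of fix_t by <:].

Definition fix_mackey : mackey :=
  @Mackey fix_t V s (fun a : fix_t => fix_val a) (fun x => insubd (0 : fix_t) (x + s x)).
End Fix.

Definition const_mackey (k : zmodType) : mackey :=
  @Mackey k k id id (fun x => x *+ 2).

Definition act_r (k : comPzRingType) (M : lmodType k) (t : {additive M -> M}) :
    pairing (fix_mackey t) (const_mackey k) (fix_mackey t) :=
  @Pairing (fix_mackey t) (const_mackey k) (fix_mackey t)
    (fun a r => insubd (0 : fix_t t) (r *: fix_val a)) (fun x r => r *: x).

Definition act_l (k : comPzRingType) (N : lmodType k) (t : {additive N -> N}) :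
    pairing (const_mackey k) (fix_mackey t) (fix_mackey t) :=
  @Pairing (const_mackey k) (fix_mackey t) (fix_mackey t)
    (fun r b => insubd (0 : fix_t t) (r *: fix_val b)) (fun r y => r *: y).

Definition is_klin (k : pzRingType) (U V : lmodType k) (f : U -> V) :=
  forall r x y, f (r *: x + y) = r *: f x + f y.

Definition is_bilin (k : pzRingType) (M N P : lmodType k) (b : M -> N -> P) :=
  (forall m, is_klin (b m)) /\ (forall n, is_klin (b ^~ n)).

Definition is_tensor (k : comPzRingType) (M N T : lmodType k) (t : M -> N -> T) :=
  is_bilin t /\
  forall (P : lmodType k) (b : M -> N -> P), is_bilin b ->
    exists f : T -> P, [/\ is_klin f, (forall m n, f (t m n) = b m n) &
      forall g : T -> P, is_klin g -> (forall m n, g (t m n) = b m n) ->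
        forall z, g z = f z].

Definition can_pairing (k : comPzRingType) (M N T : lmodType k)
    (tM : {additive M -> M}) (tN : {additive N -> N}) (tT : {additive T -> T})
    (t : M -> N -> T) : pairing (fix_mackey tM) (fix_mackey tN) (fix_mackey tT) :=
  @Pairing (fix_mackey tM) (fix_mackey tN) (fix_mackey tT)
    (fun a b => insubd (0 : fix_t tT) (t (fix_val a) (fix_val b))) t.

Definition two_invertible (M : zmodType) := bijective (fun x : M => x *+ 2).

Record tambara_ops (M : mackey) := TambaraOps {
  to_mul1 : mk_top M -> mk_top M -> mk_top M;
  to_one1 : mk_top M;
  to_mule : mk_bot M -> mk_bot M -> mk_bot M;
  to_onee : mk_bot M;
  to_nm   : mk_bot M -> mk_top M }.

Definition is_comring_ops (V : zmodType) (mul : V -> V -> V) (one : V) :=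
  [/\ associative mul, commutative mul, left_id one mul &
      left_distributive mul +%R].

Definition is_tambara (M : mackey) (o : tambara_ops M) :=
  [/\ is_mackey M,
      is_comring_ops (to_mul1 o) (to_one1 o) &
      is_comring_ops (to_mule o) (to_onee o)] /\
  [/\
      (forall a b, mk_res (to_mul1 o a b) = to_mule o (mk_res a) (mk_res b))
        /\ mk_res (to_one1 o) = to_onee o,
      (forall x y, mk_w (to_mule o x y) = to_mule o (mk_w x) (mk_w y))
        /\ mk_w (to_onee o) = to_onee o,
      (forall x a, to_mul1 o (mk_tr x) a = mk_tr (to_mule o x (mk_res a))) &
      [/\ (forall x y, to_nm o (to_mule o x y) = to_mul1 o (to_nm o x) (to_nm o y)),
          to_nm o (to_onee o) = to_one1 o,
          (forall x, to_nm o (mk_w x) = to_nm o x),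
          (forall x, mk_res (to_nm o x) = to_mule o x (mk_w x)) &
          (forall x y, to_nm o (x + y) =
               to_nm o x + to_nm o y + mk_tr (to_mule o x (mk_w y)))]].

Definition is_tambara_hom (M N : mackey) (oM : tambara_ops M) (oN : tambara_ops N)
    (f : mackey_hom M N) :=
  is_mackey_hom f /\
  [/\ (forall a b, mh_top f (to_mul1 oM a b) = to_mul1 oN (mh_top f a) (mh_top f b)),
      mh_top f (to_one1 oM) = to_one1 oN,
      (forall x y, mh_bot f (to_mule oM x y) = to_mule oN (mh_bot f x) (mh_bot f y)),
      mh_bot f (to_onee oM) = to_onee oN &
      (forall x, mh_top f (to_nm oM x) = to_nm oN (mh_bot f x))].

Definition fix_tambara (L : comPzRingType) (s : {additive L -> L}) :
    tambara_ops (fix_mackey s) :=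
  @TambaraOps (fix_mackey s)
    (fun a b => insubd (0 : fix_t s) (fix_val a * fix_val b))
    (insubd (0 : fix_t s) 1)
    *%R 1
    (fun x => insubd (0 : fix_t s) (x * s x)).

(* a Tambara structure on B is the one induced by the relative box product
   of Tambara functors: beta is multiplicative, unital, and compatible with norms *)
Definition box_tambara_compat (M N B : mackey) (oM : tambara_ops M)
    (oN : tambara_ops N) (oB : tambara_ops B) (beta : pairing M N B) :=
  [/\ (forall a b a' b', to_mul1 oB (pr_top beta a b) (pr_top beta a' b') =
                         pr_top beta (to_mul1 oM a a') (to_mul1 oN b b')),
      to_one1 oB = pr_top beta (to_one1 oM) (to_one1 oN),
      (forall x y x' y', to_mule oB (pr_bot beta x y) (pr_bot beta x' y') =
                         pr_bot beta (to_mule oM x x') (to_mule oN y y')),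
      to_onee oB = pr_bot beta (to_onee oM) (to_onee oN) &
      (forall x y, to_nm oB (pr_bot beta x y) = pr_top beta (to_nm oM x) (to_nm oN y))].

(* Main.v *)
Require Import Defs.
From HB Require Import structures.
From mathcomp Require Import all_boot all_order all_algebra.
From mathcomp Require Import boolp.
From mathcomp Require Import ring.
Set Implicit Arguments. Unset Strict Implicit. Unset Printing Implicit Defensive.
Import GRing.Theory.
Local Open Scope ring_scope.

Section AddK.
Variables (k : comPzRingType) (A : zmodType).
Record addk := AddK { akf :> k -> A; akP : is_add akf }.
Lemma addk_ext (u v : addk) : akf u =1 akf v -> u = v.
Proof.
case: u v => f fP [g gP] /= /funext E; subst g.
by rewrite (Prop_irrelevance fP gP).
Qed.
HB.instance Definition _ := gen_eqMixin addk.
HB.instance Definition _ := gen_choiceMixin addk.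
Definition ak0 : addk := @AddK (fun _ => 0) (fun _ _ => esym (addr0 0)).
Lemma akoppP (u : addk) : is_add (fun s => - u s).
Proof. by move=> x y; rewrite akP opprD. Qed.
Definition akopp u := AddK (akoppP u).
Lemma akaddP (u v : addk) : is_add (fun s => u s + v s).
Proof. by move=> x y; rewrite !akP addrACA. Qed.
Definition akadd u v := AddK (akaddP u v).
Lemma akaddA : associative akadd.
Proof. by move=> u v w; apply: addk_ext => s /=; rewrite addrA. Qed.
Lemma akaddC : commutative akadd.
Proof. by move=> u v; apply: addk_ext => s /=; rewrite addrC. Qed.
Lemma akadd0 : left_id ak0 akadd.
Proof. by move=> u; apply: addk_ext => s /=; rewrite add0r. Qed.
Lemma akaddN : left_inverse ak0 akopp akadd.
Proof. by move=> u; apply: addk_ext => s /=; rewrite addNr. Qed.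
HB.instance Definition _ := GRing.isZmodule.Build addk akaddA akaddC akadd0 akaddN.
Lemma akscaleP (r : k) (u : addk) : is_add (fun s => u (s * r)).
Proof. by move=> x y; rewrite mulrDl akP. Qed.
Definition akscale r u := AddK (akscaleP r u).
Lemma akscaleA a b v : akscale a (akscale b v) = akscale (a * b) v.
Proof. by apply: addk_ext => s /=; rewrite mulrA. Qed.
Lemma akscale1 : left_id 1 akscale.
Proof. by move=> u; apply: addk_ext => s /=; rewrite mulr1. Qed.
Lemma akscaleDr : right_distributive akscale +%R.
Proof. by move=> r u v; apply: addk_ext => s. Qed.
Lemma akscaleDl v : {morph akscale^~ v: a b / a + b}.
Proof. by move=> a b; apply: addk_ext => s /=; rewrite mulrDr akP. Qed.
HB.instance Definition _ := GRing.Zmodule_isLmodule.Build k addk akscaleA akscale1 akscaleDr akscaleDl.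
Lemma akscaleE r (u : addk) s : (r *: u) s = u (s * r).
Proof. by []. Qed.
Lemma akaddE (u v : addk) s : (u + v) s = u s + v s.
Proof. by []. Qed.
End AddK.

Lemma is_add0 (U V : zmodType) (f : U -> V) : is_add f -> f 0 = 0.
Proof. by move=> h; have E := h 0 0; rewrite addr0 in E; apply: (addrI (f 0)); rewrite addr0 -E. Qed.

Lemma klin_add (k : pzRingType) (U V : lmodType k) (f : U -> V) : is_klin f -> is_add f.
Proof. by move=> h x y; have := h 1 x y; rewrite !scale1r. Qed.

Lemma klin_scale (k : pzRingType) (U V : lmodType k) (f : U -> V) : is_klin f ->
  forall r x, f (r *: x) = r *: f x.
Proof. by move=> h r x; rewrite -[r *: x]addr0 h (is_add0 (klin_add h)) addr0. Qed.

Section Tensor.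
Variables (k : comPzRingType) (M N T : lmodType k) (t : M -> N -> T).
Hypothesis tT : is_tensor t.

Lemma t_scalel r m n : t (r *: m) n = r *: t m n.
Proof. by case: tT => [[_ h] _]; exact: (klin_scale (h n)). Qed.
Lemma t_scaler r m n : t m (r *: n) = r *: t m n.
Proof. by case: tT => [[h _] _]; exact: (klin_scale (h m)). Qed.
Lemma t_addl m m' n : t (m + m') n = t m n + t m' n.
Proof. by case: tT => [[_ h] _]; exact: (klin_add (h n)). Qed.
Lemma t_addr m n n' : t m (n + n') = t m n + t m n'.
Proof. by case: tT => [[h _] _]; exact: (klin_add (h m)). Qed.

Lemma tensor_zmod (A : zmodType) (b : M -> N -> A) :
  (forall m, is_add (b m)) -> (forall n, is_add (b^~ n)) ->
  (forall r m n, b (r *: m) n = b m (r *: n)) ->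
  exists f : T -> A, [/\ is_add f, forall m n, f (t m n) = b m n &
    forall g, is_add g -> (forall m n, g (t m n) = b m n) -> forall z, g z = f z].
Proof.
move=> br bl bs.
have btP m n : is_add (fun s : k => b (s *: m) n).
  by move=> s1 s2; rewrite scalerDl (bl n).
pose bt m n : addk k A := AddK (btP m n).
have btb : is_bilin bt.
  split=> [m r x y | n r x y]; apply: addk_ext => s; rewrite akaddE akscaleE /=.
    by rewrite br -bs scalerA mulrC.
  by rewrite scalerDr scalerA bl.
case: tT => _ /(_ _ _ btb) [F [Fl Ft Fu]].
have Fa := klin_add Fl.
exists (fun z => F z 1); split.
- by move=> x y; rewrite Fa.
- by move=> m n; rewrite Ft /= scale1r.
move=> g ga gt z.
have GP z' : is_add (fun s : k => g (s *: z')).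
  by move=> s1 s2; rewrite scalerDl ga.
pose G z' : addk k A := AddK (GP z').
have Gl : is_klin G.
  move=> r x y; apply: addk_ext => s; rewrite akaddE akscaleE /=.
  by rewrite scalerDr ga scalerA.
have Gt m n : G (t m n) = bt m n.
  by apply: addk_ext => s /=; rewrite -t_scalel gt.
have := Fu G Gl Gt z.
by move/(congr1 (fun u : addk k A => u 1)) => /=; rewrite scale1r.
Qed.

Lemma tensor_ext (A : zmodType) (g1 g2 : T -> A) : is_add g1 -> is_add g2 ->
  (forall m n, g1 (t m n) = g2 (t m n)) -> forall z, g1 z = g2 z.
Proof.
move=> a1 a2 E.
have [|||f [_ _ fu]] := @tensor_zmod A (fun m n => g1 (t m n)).
- by move=> m x y; rewrite t_addr a1.
- by move=> n x y; rewrite t_addl a1.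
- by move=> r m n; rewrite t_scalel t_scaler.
by move=> z; rewrite (fu g1 a1) // (fu g2 a2).
Qed.

Lemma tensor_ext2 (A : zmodType) (F G : T -> T -> A) :
  (forall z, is_add (F z)) -> (forall z, is_add (F^~ z)) ->
  (forall z, is_add (G z)) -> (forall z, is_add (G^~ z)) ->
  (forall m n m' n', F (t m n) (t m' n') = G (t m n) (t m' n')) ->
  forall z z', F z z' = G z z'.
Proof.
move=> F1 F2 G1 G2 E z z'.
have E1 m n w : F (t m n) w = G (t m n) w by apply: tensor_ext.
by apply: (tensor_ext (g1 := F^~ z') (g2 := G^~ z')).
Qed.
End Tensor.


Section FixLemmas.
Variables (V : zmodType) (s : {additive V -> V}).
Lemma fixE x : (x \in fixp s) = (s x == x).
Proof. by []. Qed.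
Lemma fixvalP (u : fix_t s) : s (fix_val u) = fix_val u.
Proof. by apply/eqP; case: u. Qed.
Lemma insubdK0 x : s x = x -> fix_val (insubd (0 : fix_t s) x) = x.
Proof. by move=> h; rewrite insubdK // fixE h. Qed.
Lemma fix_valD (u v : fix_t s) : fix_val (u + v) = fix_val u + fix_val v.
Proof. by []. Qed.
Lemma fix_val_inj : injective (@fix_val V s).
Proof. exact: val_inj. Qed.
Hypothesis sinv : involutive s.
Lemma trfixK x : fix_val (insubd (0 : fix_t s) (x + s x)) = x + s x.
Proof. by rewrite insubdK0 // raddfD sinv addrC. Qed.
Lemma fix_is_mackey : is_mackey (fix_mackey s).
Proof.
split; split => /=.
- by move=> x y; rewrite raddfD.
- by move=> x y.
- by move=> x y; apply: fix_val_inj; rewrite fix_valD !trfixK raddfD addrACA.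
- exact: sinv.
- exact: fixvalP.
- by move=> x; congr insubd; rewrite sinv addrC.
- by move=> x; rewrite trfixK.
Qed.
End FixLemmas.

Lemma comp_hom (A B C : mackey) (f : mackey_hom A B) (g : mackey_hom B C) :
  is_mackey_hom f -> is_mackey_hom g ->
  is_mackey_hom (MackeyHom (mh_top g \o mh_top f) (mh_bot g \o mh_bot f)).
Proof.
case=> f1 f2 f3 f4 f5 [g1 g2 g3 g4 g5]; split=> /=.
- by move=> x y /=; rewrite f1 g1.
- by move=> x y /=; rewrite f2 g2.
- by move=> x /=; rewrite f3 g3.
- by move=> x /=; rewrite f4 g4.
- by move=> x /=; rewrite f5 g5.
Qed.

Lemma id_hom (A : mackey) : is_mackey_hom (MackeyHom (@id (mk_top A)) (@id (mk_bot A))).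
Proof. by []. Qed.

Section MainMackey.
Variables (k : comPzRingType) (M N T : lmodType k).
Variables (tauM : {additive M -> M}) (tauN : {additive N -> N}) (tauT : {additive T -> T}).
Variable t : M -> N -> T.
Hypotheses (iM : involutive tauM) (iN : involutive tauN) (tT : is_tensor t).
Hypothesis tauTt : forall m n, tauT (t m n) = t (tauM m) (tauN n).
Hypotheses (lM : forall r x, tauM (r *: x) = r *: tauM x)
           (lN : forall r x, tauN (r *: x) = r *: tauN x).

Lemma iT : involutive tauT.
Proof.
apply: (tensor_ext tT (g1 := tauT \o tauT) (g2 := id)) => /=.
- by move=> x y; rewrite !raddfD.
- by [].
- by move=> m n; rewrite !tauTt iM iN.
Qed.

Local Notation can := (can_pairing tauM tauN tauT t).

Lemma can_fix (a : fix_t tauM) (b : fix_t tauN) : tauT (t (fix_val a) (fix_val b)) = t (fix_val a) (fix_val b).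
Proof. by rewrite tauTt !fixvalP. Qed.

Lemma can_val (a : fix_t tauM) (b : fix_t tauN) :
  fix_val (insubd (0 : fix_t tauT) (t (fix_val a) (fix_val b))) = t (fix_val a) (fix_val b).
Proof. by rewrite insubdK0 // tauTt !fixvalP. Qed.

Lemma can_dress : is_dress_pairing can.
Proof.
split; split => /=.
- move=> a x y; apply: fix_val_inj.
  by rewrite [RHS]fix_valD !can_val fix_valD (t_addr tT).
- move=> b x y; apply: fix_val_inj.
  by rewrite [RHS]fix_valD !can_val fix_valD (t_addl tT).
- by move=> x y z; rewrite (t_addr tT).
- by move=> y x z; rewrite (t_addl tT).
- by move=> x y; rewrite tauTt.
- by move=> a b; rewrite can_val.
- move=> x b; congr insubd; rewrite trfixK // tauTt fixvalP (t_addl tT) //.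
- move=> a y; congr insubd; rewrite trfixK // tauTt fixvalP (t_addr tT) //.
Qed.

Lemma fix_scale (V : lmodType k) (s : {additive V -> V}) (ls : forall r x, s (r *: x) = r *: s x)
  (r : k) (u : fix_t s) : fix_val (insubd (0 : fix_t s) (r *: fix_val u)) = r *: fix_val u.
Proof. by rewrite insubdK0 // ls fixvalP. Qed.

Lemma can_bal : balanced (act_r tauM) (act_l tauN) can.
Proof.
split => /=.
- by move=> a r b; rewrite (fix_scale lM) (fix_scale lN) (t_scalel tT) (t_scaler tT).
- by move=> x r y; rewrite (t_scalel tT) (t_scaler tT).
Qed.
End MainMackey.


Section Box.
Variables (k : comPzRingType) (M N T : lmodType k).
Variables (tauM : {additive M -> M}) (tauN : {additive N -> N}) (tauT : {additive T -> T}).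
Variable t : M -> N -> T.
Hypotheses (iM : involutive tauM) (iN : involutive tauN) (tT : is_tensor t).
Hypothesis tauTt : forall m n, tauT (t m n) = t (tauM m) (tauN n).
Hypotheses (lM : forall r x, tauM (r *: x) = r *: tauM x)
           (lN : forall r x, tauN (r *: x) = r *: tauN x).
Variables (B : mackey) (beta : pairing (fix_mackey tauM) (fix_mackey tauN) B).
Hypothesis box : is_rel_box (act_r tauM) (act_l tauN) beta.
Variable H : T -> T.
Hypotheses (Ha : is_add H) (H2 : forall z, H z + H z = z)
  (Htau : forall z, tauT (H z) = H (tauT z)).
Hypothesis Hfrob : forall (a : fix_t tauM) (b : fix_t tauN), exists x y,
  H (t (fix_val a) (fix_val b)) = t x y /\ mk_tr (pr_bot beta x y) = pr_top beta a b.

Lemma box_iso : exists (phi : mackey_hom B (fix_mackey tauT))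
    (psi : mackey_hom (fix_mackey tauT) B),
  [/\ is_mackey_hom phi, is_mackey_hom psi,
      (forall u, mh_top psi (mh_top phi u) = u) /\ (forall u, mh_top phi (mh_top psi u) = u),
      (forall u, mh_bot psi (mh_bot phi u) = u) /\ (forall u, mh_bot phi (mh_bot psi u) = u) &
      [/\ (forall a b, mh_top phi (pr_top beta a b) = pr_top (can_pairing tauM tauN tauT t) a b),
          (forall x y, mh_bot phi (pr_bot beta x y) = pr_bot (can_pairing tauM tauN tauT t) x y) &
          (forall m n, mh_bot psi (t m n) = pr_bot beta m n)]].
Proof.
case: (box) => Bm Bd Bb Buniv.
have [[wa resa tra] [winv wres trw restr]] := Bm.
have [[bd1 bd2 bd3 bd4] [bd5 bd6 bd7 bd8]] := Bd.
have iTT := iT iM iN tT tauTt.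
have [phi [phih phit phib _]] := Buniv _ _ (fix_is_mackey iTT)
   (can_dress iM iN tT tauTt) (can_bal tauT tT lM lN).
have [psib [psia psit _]] := tensor_zmod tT bd3 bd4 (fun r m n => (Bb.2 m r n)).
pose psit0 (u : fix_t tauT) := mk_tr (psib (H (fix_val u))).
pose psi := @MackeyHom (fix_mackey tauT) B psit0 psib.
have psi_w z : psib (tauT z) = mk_w (psib z).
  move: z; apply: (tensor_ext tT (g1 := psib \o tauT) (g2 := @mk_w B \o psib)) => /=.
  - by move=> x y /=; rewrite raddfD psia.
  - by move=> x y /=; rewrite psia wa.
  - by move=> m n; rewrite tauTt !psit bd5.
have psih : is_mackey_hom psi.
  split => /=.
  - by move=> u v; rewrite /psit0 fix_valD Ha psia tra.
  - exact: psia.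
  - exact: psi_w.
  - by move=> a; rewrite /psit0 restr -psi_w Htau fixvalP -psia H2.
  - move=> x; rewrite /psit0 (trfixK iTT) Ha psia -Htau psi_w tra trw.
    by rewrite -tra -psia H2.
have psican a b : psit0 (pr_top (can_pairing tauM tauN tauT t) a b) = pr_top beta a b.
  rewrite /psit0 /= (can_val tauTt).
  by have [x [y [E1 E2]]] := Hfrob a b; rewrite E1 psit.
have [f0 [_ _ _ U]] := Buniv B beta Bm Bd Bb.
have gh := comp_hom phih psih.
have [Ut Ub] := U _ gh (fun a b => etrans (congr1 psit0 (phit a b)) (psican a b))
   (fun x y => etrans (congr1 psib (phib x y)) (psit x y)).
have [It Ib] := U _ (id_hom B) (fun _ _ => erefl) (fun _ _ => erefl).
have phipsib z : mh_bot phi (psib z) = z.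
  move: z; apply: (tensor_ext tT (g1 := mh_bot phi \o psib) (g2 := id)) => //=.
  - by case: phih => _ h _ _ _ x y /=; rewrite psia h.
  - by move=> m n; rewrite psit phib.
exists phi, psi; split => //.
- split=> u; first by move: (Ut u) (It u) => /= -> <-.
  apply: fix_val_inj.
  have [_ _ _ h4 _] := phih; have [_ _ _ p4 _] := psih.
  by move: (h4 (mh_top psi u)) (p4 u) => /= <- <-; apply: phipsib.
- by split=> u; [move: (Ub u) (Ib u) => /= -> <- | rewrite /= phipsib].
Qed.
End Box.


Lemma half_ex (V : zmodType) : two_invertible V ->
  exists h : V -> V, [/\ is_add h, (forall x, h x + h x = x) &
    (forall f : V -> V, is_add f -> forall x, f (h x) = h (f x))].
Proof.
case=> g c1 c2.
have hh x : g x + g x = x by rewrite -mulr2n c2.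
have hK x : g (x + x) = x by rewrite -mulr2n c1.
exists g; split => //.
  by move=> x y; rewrite -{1}(hh x) -{1}(hh y) addrACA hK.
by move=> f fa x; rewrite -[in RHS](hh x) fa hK.
Qed.

Lemma mackey_core (k : comPzRingType) (M N T : lmodType k)
  (tauM : {additive M -> M}) (tauN : {additive N -> N}) (tauT : {additive T -> T})
  (t : M -> N -> T) :
  involutive tauM -> involutive tauN ->
  (forall r x, tauM (r *: x) = r *: tauM x) -> (forall r x, tauN (r *: x) = r *: tauN x) ->
  two_invertible M \/ two_invertible N -> is_tensor t ->
  (forall m n, tauT (t m n) = t (tauM m) (tauN n)) ->
  forall (B : mackey) (beta : pairing (fix_mackey tauM) (fix_mackey tauN) B),
  is_rel_box (act_r tauM) (act_l tauN) beta ->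
  exists (phi : mackey_hom B (fix_mackey tauT)) (psi : mackey_hom (fix_mackey tauT) B),
  [/\ is_mackey_hom phi, is_mackey_hom psi,
      (forall u, mh_top psi (mh_top phi u) = u) /\ (forall u, mh_top phi (mh_top psi u) = u),
      (forall u, mh_bot psi (mh_bot phi u) = u) /\ (forall u, mh_bot phi (mh_bot psi u) = u) &
      [/\ (forall a b, mh_top phi (pr_top beta a b) = pr_top (can_pairing tauM tauN tauT t) a b),
          (forall x y, mh_bot phi (pr_bot beta x y) = pr_bot (can_pairing tauM tauN tauT t) x y) &
          (forall m n, mh_bot psi (t m n) = pr_bot beta m n)]].
Proof.
move=> iM iN lM lN two tT tauTt B beta box.
have [_ [_ [_ _ bd7 bd8]] _ _] := box.
case: two => [hM|hN].
- have [h [ha hh hc]] := half_ex hM.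
  have hl r x : h (r *: x) = r *: h x by rewrite (hc _ (fun a b => scalerDr r a b) x).
  have htau x : tauM (h x) = h (tauM x) := hc _ (fun a b => raddfD tauM a b) x.
  have [H [Ha Ht _]] := @tensor_zmod _ _ _ _ _ tT _ (fun m n => t (h m) n)
    (fun m x y => t_addr tT _ _ _) (fun n x y => etrans (congr1 (t^~ n) (ha x y)) (t_addl tT _ _ _))
    (fun r m n => etrans (congr1 (t^~ n) (hl r m)) (etrans (t_scalel tT _ _ _) (esym (t_scaler tT _ _ _)))).
  apply: (box_iso iM iN tT tauTt lM lN box Ha (H := H)).
  + apply: (tensor_ext tT (g1 := fun z => H z + H z) (g2 := id)) => //=.
    * by move=> x y /=; rewrite Ha addrACA.
    * by move=> m n /=; rewrite Ht -(t_addl tT) hh.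
  + apply: (tensor_ext tT (g1 := tauT \o H) (g2 := H \o tauT)) => /=.
    * by move=> x y /=; rewrite Ha raddfD.
    * by move=> x y /=; rewrite raddfD Ha.
    * by move=> m n /=; rewrite Ht !tauTt Ht htau.
  + move=> a b; exists (h (fix_val a)), (fix_val b); split; first exact: Ht.
    move: (bd7 (h (fix_val a)) b) => /= ->; congr pr_top.
    by apply: fix_val_inj; rewrite (trfixK iM) htau fixvalP hh.
- have [h [ha hh hc]] := half_ex hN.
  have hl r x : h (r *: x) = r *: h x by rewrite (hc _ (fun a b => scalerDr r a b) x).
  have htau x : tauN (h x) = h (tauN x) := hc _ (fun a b => raddfD tauN a b) x.
  have [H [Ha Ht _]] := @tensor_zmod _ _ _ _ _ tT _ (fun m n => t m (h n))
    (fun m x y => etrans (congr1 (t m) (ha x y)) (t_addr tT _ _ _)) (fun n x y => t_addl tT _ _ _)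
    (fun r m n => etrans (t_scalel tT _ _ _) (esym (etrans (congr1 (t m) (hl r n)) (t_scaler tT _ _ _)))).
  apply: (box_iso iM iN tT tauTt lM lN box Ha (H := H)).
  + apply: (tensor_ext tT (g1 := fun z => H z + H z) (g2 := id)) => //=.
    * by move=> x y /=; rewrite Ha addrACA.
    * by move=> m n /=; rewrite Ht -(t_addr tT) hh.
  + apply: (tensor_ext tT (g1 := tauT \o H) (g2 := H \o tauT)) => /=.
    * by move=> x y /=; rewrite Ha raddfD.
    * by move=> x y /=; rewrite raddfD Ha.
    * by move=> m n /=; rewrite Ht !tauTt Ht htau.
  + move=> a b; exists (fix_val a), (h (fix_val b)); split; first exact: Ht.
    move: (bd8 a (h (fix_val b))) => /= ->; congr pr_top.
    by apply: fix_val_inj; rewrite (trfixK iN) htau fixvalP hh.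
Qed.


Section FixTambara.
Variables (L : comPzRingType) (s : {additive L -> L}).
Hypotheses (si : involutive s) (sM : forall x y, s (x * y) = s x * s y) (s1 : s 1 = 1).

Lemma mulfixK x y : s x = x -> s y = y -> fix_val (insubd (0 : fix_t s) (x * y)) = x * y.
Proof. by move=> hx hy; rewrite insubdK0 // sM hx hy. Qed.
Lemma nmfixK x : fix_val (insubd (0 : fix_t s) (x * s x)) = x * s x.
Proof. by rewrite insubdK0 // sM si mulrC. Qed.
Lemma onefixK : fix_val (insubd (0 : fix_t s) 1) = 1.
Proof. by rewrite insubdK0. Qed.

Lemma fix_tambara_ok : is_tambara (fix_tambara s).
Proof.
have fv := @fixvalP _ s.
split; split => /=.
- exact: fix_is_mackey.
- split.
  + by move=> a b c; apply: fix_val_inj; rewrite !mulfixK ?sM ?fv ?mulrA.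
  + by move=> a b; apply: fix_val_inj; rewrite !mulfixK ?sM ?fv 1?mulrC.
  + by move=> a; apply: fix_val_inj; rewrite mulfixK ?fv ?onefixK ?mul1r // s1.
  + by move=> a b c; apply: fix_val_inj; rewrite [RHS]fix_valD !mulfixK ?fv // fix_valD mulrDl.
- split.
  + exact: mulrA.
  + exact: mulrC.
  + exact: mul1r.
  + exact: mulrDl.
- by split; [move=> a b; rewrite mulfixK ?fv | rewrite onefixK].
- by split; [exact: sM | exact: s1].
- move=> x a; apply: fix_val_inj; rewrite !(trfixK si) mulfixK ?fv //.
    by rewrite mulrDl sM fv.
  by rewrite raddfD si addrC.
- split.
  + move=> x y; apply: fix_val_inj; rewrite !nmfixK mulfixK.
    * by rewrite sM mulrACA.
    * by rewrite sM si mulrC.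
    * by rewrite sM si mulrC.
  + by rewrite s1 mulr1.
  + by move=> x; rewrite si mulrC.
  + by move=> x; rewrite nmfixK.
  + move=> x y; apply: fix_val_inj; rewrite !fix_valD !nmfixK (trfixK si) raddfD.
    rewrite sM si mulrDl !mulrDr.
    by rewrite [s x * y]mulrC; ring.
Qed.
End FixTambara.


Definition tr_ops (B P : mackey) (f : mackey_hom B P) (g : mackey_hom P B)
  (oP : tambara_ops P) : tambara_ops B :=
  @TambaraOps B (fun u v => mh_top g (to_mul1 oP (mh_top f u) (mh_top f v)))
    (mh_top g (to_one1 oP))
    (fun x y => mh_bot g (to_mule oP (mh_bot f x) (mh_bot f y)))
    (mh_bot g (to_onee oP))
    (fun x => mh_top g (to_nm oP (mh_bot f x))).

Section Transport.
Variables (B P : mackey) (f : mackey_hom B P) (g : mackey_hom P B) (oP : tambara_ops P).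
Hypotheses (Bm : is_mackey B) (fh : is_mackey_hom f) (gh : is_mackey_hom g).
Hypotheses (gft : forall u, mh_top g (mh_top f u) = u) (fgt : forall u, mh_top f (mh_top g u) = u).
Hypotheses (gfb : forall u, mh_bot g (mh_bot f u) = u) (fgb : forall u, mh_bot f (mh_bot g u) = u).
Hypothesis oPt : is_tambara oP.

Lemma transport_ok : is_tambara (tr_ops f g oP) /\ is_tambara_hom (tr_ops f g oP) oP f.
Proof.
have [fat fab fw fres ftr] := fh.
have [gat gab gw gres gtr] := gh.
have [[Pm [mA mC m1 mD] [eA eC e1 eD]] [[rM r1] [wM w1] frob [nM n1 nw nres nadd]]] := oPt.
split; last by split => //=; split => //= *; rewrite ?fgt ?fgb.
split; split => //=.
- split.
  + by move=> a b c; rewrite !fgt mA.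
  + by move=> a b; rewrite mC.
  + by move=> a; rewrite fgt m1 gft.
  + by move=> a b c; rewrite fat mD gat.
- split.
  + by move=> a b c; rewrite !fgb eA.
  + by move=> a b; rewrite eC.
  + by move=> a; rewrite fgb e1 gfb.
  + by move=> a b c; rewrite fab eD gab.
- split.
  + by move=> a b; rewrite -gres rM !fres.
  + by rewrite -gres r1.
- split.
  + by move=> x y; rewrite -gw wM !fw.
  + by rewrite -gw w1.
- by move=> x a; rewrite ftr frob gtr fres.
- split.
  + by move=> x y; rewrite fgb nM !fgt.
  + by rewrite fgb n1.
  + by move=> x; rewrite fw nw.
  + by move=> x; rewrite -gres nres fw.
  + by move=> x y; rewrite fab nadd !gat gtr fw.
Qed.
End Transport.


Lemma part1 :
  (forall (k : comPzRingType) (M N : lmodType k)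
      (tauM : {linear M -> M}) (tauN : {linear N -> N}),
    involutive tauM -> involutive tauN ->
    two_invertible M \/ two_invertible N ->
    forall (T : lmodType k) (t : M -> N -> T) (tauT : {linear T -> T}),
    is_tensor t ->
    (forall m n, tauT (t m n) = t (tauM m) (tauN n)) ->
    forall (B : mackey) (beta : pairing (fix_mackey tauM) (fix_mackey tauN) B),
    is_rel_box (act_r tauM) (act_l tauN) beta ->
    exists phi : mackey_hom B (fix_mackey tauT),
      [/\ is_mackey_iso phi,
          (forall a b, mh_top phi (pr_top beta a b) =
                       pr_top (can_pairing tauM tauN tauT t) a b) &
          (forall x y, mh_bot phi (pr_bot beta x y) =
                       pr_bot (can_pairing tauM tauN tauT t) x y)]).
Proof.
move=> k M N tauM tauN iM iN two T t tauT tT tauTt B beta box.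
have [phi [psi [phih psih [gft fgt] [gfb fgb] [phit phib _]]]] :=
  mackey_core iM iN (fun r x => linearZ_LR tauM r x) (fun r x => linearZ_LR tauN r x)
    two tT tauTt box.
exists phi; split => //; split => //.
- by exists (mh_top psi).
- by exists (mh_bot psi).
Qed.

Lemma part2 :
  (forall (k : comPzRingType) (M N : comAlgType k)
      (tauM : {lrmorphism M -> M}) (tauN : {lrmorphism N -> N}),
    involutive tauM -> involutive tauN ->
    two_invertible M \/ two_invertible N ->
    forall (T : comAlgType k) (t : M -> N -> T) (tauT : {linear T -> T}),
    is_tensor t ->
    (forall m n m' n', t m n * t m' n' = t (m * m') (n * n')) ->
    t 1 1 = 1 ->
    (forall m n, tauT (t m n) = t (tauM m) (tauN n)) ->
    forall (B : mackey) (beta : pairing (fix_mackey tauM) (fix_mackey tauN) B),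
    is_rel_box (act_r tauM) (act_l tauN) beta ->
    exists phi : mackey_hom B (fix_mackey tauT),
      [/\ is_mackey_iso phi,
          (forall a b, mh_top phi (pr_top beta a b) =
                       pr_top (can_pairing tauM tauN tauT t) a b),
          (forall x y, mh_bot phi (pr_bot beta x y) =
                       pr_bot (can_pairing tauM tauN tauT t) x y),
          (exists oB : tambara_ops B, is_tambara oB /\
             box_tambara_compat (fix_tambara tauM) (fix_tambara tauN) oB beta) &
          (forall oB : tambara_ops B, is_tambara oB ->
             box_tambara_compat (fix_tambara tauM) (fix_tambara tauN) oB beta ->
             is_tambara_hom oB (fix_tambara tauT) phi)]).
Proof.
move=> k M N tauM tauN iM iN two T t tauT tT tmul t11 tauTt B beta box.
have [phi [psi [phih psih [gft fgt] [gfb fgb] [phit phib psit]]]] :=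
  mackey_core iM iN (fun r x => linearZ_LR tauM r x) (fun r x => linearZ_LR tauN r x)
    two tT tauTt box.
have iTT := iT iM iN tT tauTt.
have [Bm _ _ _] := box.
have tM z z' : tauT (z * z') = tauT z * tauT z'.
  move: z z'; apply: (tensor_ext2 tT (F := fun z z' => tauT (z * z')) (G := fun z z' => tauT z * tauT z')) => /=.
  - by move=> z x y; rewrite mulrDr raddfD.
  - by move=> z x y; rewrite mulrDl raddfD.
  - by move=> z x y; rewrite raddfD mulrDr.
  - by move=> z x y; rewrite raddfD mulrDl.
  - by move=> m n m' n'; rewrite tmul !tauTt !rmorphM tmul.
have t1 : tauT 1 = 1 by rewrite -t11 tauTt !rmorph1.
have Tt := fix_tambara_ok iTT tM t1.
have fvM := @fixvalP _ tauM; have fvN := @fixvalP _ tauN; have fvT := @fixvalP _ tauT.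
exists phi; split => //.
- by split => //; [exists (mh_top psi) | exists (mh_bot psi)].
- exists (tr_ops phi psi (fix_tambara tauT)).
  split; first exact: (transport_ok Bm phih psih gft fgt gfb fgb Tt).1.
  have cv := can_val tauTt; have cf := can_fix tauTt.
  split => /=.
  + move=> a b a' b'; rewrite !phit -[RHS]gft phit; congr (mh_top psi _).
    apply: fix_val_inj => /=; rewrite !cv (mulfixK tM (cf a b) (cf a' b')) tmul.
    by rewrite !(mulfixK (rmorphM _)) ?fvM ?fvN.
  + rewrite -[RHS]gft phit; congr (mh_top psi _).
    by apply: fix_val_inj => /=; rewrite cv (onefixK t1) !(onefixK (rmorph1 _)) t11.
  + by move=> x y x' y'; rewrite !phib /= tmul psit.
  + by rewrite -t11 psit.
  + move=> x y; rewrite phib -[RHS]gft phit; congr (mh_top psi _).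
    apply: fix_val_inj => /=; rewrite cv (nmfixK iTT tM) !(nmfixK _ (rmorphM _)) //.
    by rewrite -tmul; congr (_ * _); exact: tauTt.
- move=> oB [[_ _ [eA eC e1 eD]] [[rM r1] _ _ [_ _ _ nres _]]] [c1 c2 c3 c4 c5].
  have [ph1 ph2 ph3 ph4 ph5] := phih.
  have [ps1 ps2 _ _ _] := psih.
  have key z z' : mh_bot phi (to_mule oB (mh_bot psi z) (mh_bot psi z')) = z * z'.
    move: z z'; apply: (tensor_ext2 tT
      (F := fun z z' => mh_bot phi (to_mule oB (mh_bot psi z) (mh_bot psi z')))
      (G := fun z z' => z * z')) => /=.
    - by move=> z x y; rewrite ps2 [to_mule oB _ _]eC eD ph2 [to_mule oB _ _]eC [to_mule oB (mh_bot psi y) _]eC.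
    - by move=> z x y; rewrite ps2 eD ph2.
    - by move=> z x y; rewrite mulrDr.
    - by move=> z x y; rewrite mulrDl.
    - by move=> m n m' n'; rewrite !psit c3 phib tmul.
  have phim x y : mh_bot phi (to_mule oB x y) = mh_bot phi x * mh_bot phi y.
    by have := key (mh_bot phi x) (mh_bot phi y); rewrite !gfb.
  split => //; split => /=.
  + move=> u v; apply: fix_val_inj => /=.
    move: (ph4 (to_mul1 oB u v)) => /= <-; rewrite rM phim !ph4.
    by rewrite (mulfixK tM) ?fvT.
  + apply: fix_val_inj => /=.
    by move: (ph4 (to_one1 oB)) => /= <-; rewrite r1 c4 phib /= t11 (onefixK t1).
  + exact: phim.
  + by rewrite c4 phib /= t11.
  + move=> x; apply: fix_val_inj => /=.
    move: (ph4 (to_nm oB x)) => /= <-; rewrite nres phim ph3.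
    by rewrite (nmfixK iTT tM).
Qed.


Theorem mainTheorem4 :
  (* Mackey part: k-modules with k-linear involutions *)
  (forall (k : comPzRingType) (M N : lmodType k)
      (tauM : {linear M -> M}) (tauN : {linear N -> N}),
    involutive tauM -> involutive tauN ->
    two_invertible M \/ two_invertible N ->
    forall (T : lmodType k) (t : M -> N -> T) (tauT : {linear T -> T}),
    is_tensor t ->
    (forall m n, tauT (t m n) = t (tauM m) (tauN n)) ->
    forall (B : mackey) (beta : pairing (fix_mackey tauM) (fix_mackey tauN) B),
    is_rel_box (act_r tauM) (act_l tauN) beta ->
    exists phi : mackey_hom B (fix_mackey tauT),
      [/\ is_mackey_iso phi,
          (forall a b, mh_top phi (pr_top beta a b) =
                       pr_top (can_pairing tauM tauN tauT t) a b) &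
          (forall x y, mh_bot phi (pr_bot beta x y) =
                       pr_bot (can_pairing tauM tauN tauT t) x y)])
  /\
  (* Tambara part: commutative k-algebras with k-algebra involutions *)
  (forall (k : comPzRingType) (M N : comAlgType k)
      (tauM : {lrmorphism M -> M}) (tauN : {lrmorphism N -> N}),
    involutive tauM -> involutive tauN ->
    two_invertible M \/ two_invertible N ->
    forall (T : comAlgType k) (t : M -> N -> T) (tauT : {linear T -> T}),
    is_tensor t ->
    (forall m n m' n', t m n * t m' n' = t (m * m') (n * n')) ->
    t 1 1 = 1 ->
    (forall m n, tauT (t m n) = t (tauM m) (tauN n)) ->
    forall (B : mackey) (beta : pairing (fix_mackey tauM) (fix_mackey tauN) B),
    is_rel_box (act_r tauM) (act_l tauN) beta ->
    exists phi : mackey_hom B (fix_mackey tauT),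
      [/\ is_mackey_iso phi,
          (forall a b, mh_top phi (pr_top beta a b) =
                       pr_top (can_pairing tauM tauN tauT t) a b),
          (forall x y, mh_bot phi (pr_bot beta x y) =
                       pr_bot (can_pairing tauM tauN tauT t) x y),
          (exists oB : tambara_ops B, is_tambara oB /\
             box_tambara_compat (fix_tambara tauM) (fix_tambara tauN) oB beta) &
          (forall oB : tambara_ops B, is_tambara oB ->
             box_tambara_compat (fix_tambara tauM) (fix_tambara tauN) oB beta ->
             is_tambara_hom oB (fix_tambara tauT) phi)]).
Proof.
Proof. exact: (conj part1 part2). Qed.
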